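(* Let $\epsilon\in\mathbb{R}$ and let $w$ be a basic solution of $\mathcal{L}_\epsilon$. Then $w(r,t)\neq 0$ for every $(r,t)\in(0,\infty)\times\mathbb{S}^1$.
   Context: Fix $a>0$, $b\in\mathbb{R}\setminus\{0\}$, $\nu\in[0,1)$, an integer $k\ge 2$ and $c\in C^k(\mathbb{S}^1,\mathbb{C})$ (functions on $\mathbb{S}^1$ are $2\pi$-periodic functions of $t\in\mathbb{R}$). For $\epsilon\in\mathbb{R}$ put $\lambda_\epsilon=a+ib\epsilon$, $L_\epsilon=\lambda_\epsilon\partial_t-ir\partial_r$ on $(0,\infty)\times\mathbb{S}^1$ (coordinates $(r,t)$), and $\mathcal{L}_\epsilon u=L_\epsilon u+i\lambda_\epsilon\nu u-c(t)\bar u$. A basic solution of $\mathcal{L}_\epsilon$ is a nontrivial solution $w$ of $\mathcal{L}_\epsilon w=0$ on $(0,\infty)\times\mathbb{S}^1$ of the form $w(r,t)=r^\sigma\phi(t)+\overline{r^\sigma\psi(t)}$, with $\sigma\in\mathbb{C}$ and $\phi,\psi$ $2\pi$-periodic $\mathbb{C}$-valued functions. *)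

(* Defs.v *)
From Stdlib Require Import Reals.
Open Scope R_scope.

Definition Cpx := (R * R)%type.
Definition Re (z : Cpx) : R := fst z.
Definition Im (z : Cpx) : R := snd z.
Definition RtoC (x : R) : Cpx := (x, 0).
Definition C0 : Cpx := (0, 0).
Definition Ci : Cpx := (0, 1).
Definition Cadd (z w : Cpx) : Cpx := (Re z + Re w, Im z + Im w).
Definition Cmul (z w : Cpx) : Cpx :=
  (Re z * Re w - Im z * Im w, Re z * Im w + Im z * Re w).
Definition Cconj (z : Cpx) : Cpx := (Re z, - Im z).
Definition Cexp (z : Cpx) : Cpx := (exp (Re z) * cos (Im z), exp (Re z) * sin (Im z)).

Definition Cpow_pos (r : R) (sigma : Cpx) : Cpx := Cexp (Cmul sigma (RtoC (ln r))).

Definition C_derivable_lim (f : R -> Cpx) (x : R) (d : Cpx) : Prop :=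
  derivable_pt_lim (fun s => Re (f s)) x (Re d) /\
  derivable_pt_lim (fun s => Im (f s)) x (Im d).

Definition C_continuous (f : R -> Cpx) : Prop :=
  continuity (fun s => Re (f s)) /\ continuity (fun s => Im (f s)).

(* Functions on S^1 = 2pi-periodic functions on R. *)
Definition periodic2pi {A : Type} (f : R -> A) : Prop :=
  forall t, f (t + 2 * PI) = f t.

Definition Ck_S1 (k : nat) (c : R -> Cpx) : Prop :=
  periodic2pi c /\
  exists D : nat -> R -> Cpx,
    D 0%nat = c /\
    (forall j, (j < k)%nat -> forall t, C_derivable_lim (D j) t (D (S j) t)) /\
    (forall j, (j <= k)%nat -> C_continuous (D j)).

Definition lam (a b eps : R) : Cpx := (a, b * eps).

(* w : R -> R -> Cpx, w r t, is a (classical) solution of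
   L_eps w = lambda dt w - i r dr w + i lambda nu w - c(t) conj w = 0
   on (0,oo) x S^1: at every point partial derivatives exist and the
   equation holds pointwise. *)
Definition is_solution (a b nu eps : R) (c : R -> Cpx) (w : R -> R -> Cpx) : Prop :=
  forall r t, 0 < r ->
    exists wt wr : Cpx,
      C_derivable_lim (fun s => w r s) t wt /\
      C_derivable_lim (fun s => w s t) r wr /\
      Cadd (Cadd (Cadd (Cmul (lam a b eps) wt)
                       (Cmul (Cmul Ci (RtoC r)) (Cmul (RtoC (-1)) wr)))
                 (Cmul (Cmul Ci (lam a b eps)) (Cmul (RtoC nu) (w r t))))
           (Cmul (RtoC (-1)) (Cmul (c t) (Cconj (w r t)))) = C0.

Definition basic_solution (a b nu eps : R) (c : R -> Cpx) (w : R -> R -> Cpx) : Prop :=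
  is_solution a b nu eps c w /\
  (forall r, 0 < r -> periodic2pi (w r)) /\
  (exists r t, 0 < r /\ w r t <> C0) /\
  exists (sigma : Cpx) (phi psi : R -> Cpx),
    periodic2pi phi /\ periodic2pi psi /\
    forall r t, 0 < r ->
      w r t = Cadd (Cmul (Cpow_pos r sigma) (phi t))
                   (Cconj (Cmul (Cpow_pos r sigma) (psi t))).

(* Main.v *)
Require Import Defs.
From Stdlib Require Import Reals Lra Lia Psatz ZArith Classical ClassicalEpsilon FunctionalExtensionality.
Open Scope R_scope.

Lemma dl_ext (f g : R -> R) x l l' :
  derivable_pt_lim f x l -> (forall s, f s = g s) -> l = l' -> derivable_pt_lim g x l'.
Proof. intros H E ->. replace g with f; auto. apply functional_extensionality; auto. Qed.

Lemma dl_mult (f g : R -> R) x lf lg : derivable_pt_lim f x lf -> derivable_pt_lim g x lg ->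
  derivable_pt_lim (fun s => f s * g s) x (lf * g x + f x * lg).
Proof. intros; exact (derivable_pt_lim_mult f g x lf lg H H0). Qed.
Lemma dl_plus (f g : R -> R) x lf lg : derivable_pt_lim f x lf -> derivable_pt_lim g x lg ->
  derivable_pt_lim (fun s => f s + g s) x (lf + lg).
Proof. intros; exact (derivable_pt_lim_plus f g x lf lg H H0). Qed.
Lemma dl_minus (f g : R -> R) x lf lg : derivable_pt_lim f x lf -> derivable_pt_lim g x lg ->
  derivable_pt_lim (fun s => f s - g s) x (lf - lg).
Proof. intros; exact (derivable_pt_lim_minus f g x lf lg H H0). Qed.
Lemma dl_const (k x : R) : derivable_pt_lim (fun _ => k) x 0.
Proof. exact (derivable_pt_lim_const k x). Qed.
Lemma dl_id (x : R) : derivable_pt_lim (fun s => s) x 1.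
Proof. exact (derivable_pt_lim_id x). Qed.
Lemma dl_scal (k : R) (f : R -> R) x l : derivable_pt_lim f x l ->
  derivable_pt_lim (fun s => k * f s) x (k * l).
Proof. intros H. eapply dl_ext. apply (dl_mult (fun _ => k) f x 0 l (dl_const k x) H).
  intros; reflexivity. ring. Qed.
Lemma dl_comp (f g : R -> R) x lf lg : derivable_pt_lim f x lf -> derivable_pt_lim g (f x) lg ->
  derivable_pt_lim (fun s => g (f s)) x (lg * lf).
Proof. intros; exact (derivable_pt_lim_comp f g x lf lg H H0). Qed.

Lemma dl_local (f g : R -> R) x l d : derivable_pt_lim f x l -> 0 < d ->
  (forall s, Rabs (s - x) < d -> f s = g s) -> derivable_pt_lim g x l.
Proof.
  intros H Hd E eps Heps. destruct (H eps Heps) as [del Hdel].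
  assert (Hm : 0 < Rmin del d) by (apply Rmin_pos; [apply cond_pos| lra]).
  exists (mkposreal _ Hm). intros h hn hl. simpl in hl.
  rewrite <- (E (x+h)), <- (E x).
  - apply Hdel; auto. apply Rlt_le_trans with (1:=hl). apply Rmin_l.
  - rewrite Rminus_diag, Rabs_R0; lra.
  - replace (x+h-x) with h by ring. apply Rlt_le_trans with (1:=hl). apply Rmin_r.
Qed.

Definition e1f (x y s : R) := exp (x * ln s) * cos (y * ln s).
Definition e2f (x y s : R) := exp (x * ln s) * sin (y * ln s).

Lemma dl_lin_ln k r : 0 < r -> derivable_pt_lim (fun s => k * ln s) r (k / r).
Proof. intros. eapply dl_ext. apply dl_scal. apply derivable_pt_lim_ln; auto. intros; auto.
  unfold Rdiv; ring. Qed.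

Lemma dl_e1 x y r : 0 < r -> derivable_pt_lim (e1f x y) r ((x * e1f x y r - y * e2f x y r)/r).
Proof. intros Hr. unfold e1f, e2f. eapply dl_ext. apply dl_mult.
  apply dl_comp. apply dl_lin_ln; auto. apply derivable_pt_lim_exp.
  apply dl_comp. apply dl_lin_ln; auto. apply derivable_pt_lim_cos.
  intros; reflexivity. cbv beta. field. lra. Qed.
Lemma dl_e2 x y r : 0 < r -> derivable_pt_lim (e2f x y) r ((x * e2f x y r + y * e1f x y r)/r).
Proof. intros Hr. unfold e1f, e2f. eapply dl_ext. apply dl_mult.
  apply dl_comp. apply dl_lin_ln; auto. apply derivable_pt_lim_exp.
  apply dl_comp. apply dl_lin_ln; auto. apply derivable_pt_lim_sin.
  intros; reflexivity. cbv beta. field. lra. Qed.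

Lemma Cpow_comp r x y : Cpow_pos r (x,y) = (e1f x y r, e2f x y r).
Proof. unfold Cpow_pos, Cexp, Cmul, RtoC, Re, Im, e1f, e2f; simpl.
  f_equal; f_equal; f_equal; ring. Qed.

Lemma pde_comp a b nu eps c w r t : is_solution a b nu eps c w -> 0 < r ->
  exists t1 t2 d1 d2,
    derivable_pt_lim (fun s => fst (w r s)) t t1 /\
    derivable_pt_lim (fun s => snd (w r s)) t t2 /\
    derivable_pt_lim (fun s => fst (w s t)) r d1 /\
    derivable_pt_lim (fun s => snd (w s t)) r d2 /\
    a*t1 - (b*eps)*t2 + r*d2 - (b*eps)*nu*fst (w r t) - a*nu*snd (w r t)
      - fst (c t) * fst (w r t) - snd (c t) * snd (w r t) = 0 /\
    a*t2 + (b*eps)*t1 - r*d1 - (b*eps)*nu*snd (w r t) + a*nu*fst (w r t)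
      + fst (c t) * snd (w r t) - snd (c t) * fst (w r t) = 0.
Proof.
  intros H Hr. destruct (H r t Hr) as [[t1 t2] [[d1 d2] [[Ht1 Ht2] [[Hd1 Hd2] E]]]].
  exists t1, t2, d1, d2. unfold Re, Im in *; simpl in *.
  repeat split; auto.
  - apply (f_equal fst) in E. unfold Cadd, Cmul, Cconj, Re, Im, RtoC, Ci, lam, C0 in E; simpl in E. lra.
  - apply (f_equal snd) in E. unfold Cadd, Cmul, Cconj, Re, Im, RtoC, Ci, lam, C0 in E; simpl in E. lra.
Qed.

Lemma wform x y r P U : Cadd (Cmul (Cpow_pos r (x,y)) P) (Cconj (Cmul (Cpow_pos r (x,y)) U)) =
  (e1f x y r * (fst P + fst U) - e2f x y r * (snd P + snd U),
   e1f x y r * (snd P - snd U) + e2f x y r * (fst P - fst U)).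
Proof. rewrite Cpow_comp. destruct P, U. unfold Cadd, Cmul, Cconj, Re, Im; simpl. f_equal; ring. Qed.

Lemma wr_formula x y (w : R -> R -> Cpx) (phi psi : R -> Cpx) r t d1 d2 :
  (forall r t, 0 < r -> w r t = Cadd (Cmul (Cpow_pos r (x,y)) (phi t)) (Cconj (Cmul (Cpow_pos r (x,y)) (psi t)))) ->
  0 < r ->
  derivable_pt_lim (fun s => fst (w s t)) r d1 ->
  derivable_pt_lim (fun s => snd (w s t)) r d2 ->
  d1 = ((x * e1f x y r - y * e2f x y r)/r) * (fst (phi t) + fst (psi t))
       - ((x * e2f x y r + y * e1f x y r)/r) * (snd (phi t) + snd (psi t)) /\
  d2 = ((x * e1f x y r - y * e2f x y r)/r) * (snd (phi t) - snd (psi t))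
       + ((x * e2f x y r + y * e1f x y r)/r) * (fst (phi t) - fst (psi t)).
Proof.
  intros Hw Hr H1 H2. split.
  - eapply uniqueness_limite. apply H1.
    apply (dl_local (fun s => e1f x y s * (fst (phi t) + fst (psi t)) - e2f x y s * (snd (phi t) + snd (psi t))) (fun s => fst (w s t)) r _ r); auto.
    + eapply dl_ext. apply (dl_minus _ _ r _ _ (dl_mult _ _ r _ _ (dl_e1 x y r Hr) (dl_const (fst (phi t) + fst (psi t)) r)) (dl_mult _ _ r _ _ (dl_e2 x y r Hr) (dl_const (snd (phi t) + snd (psi t)) r))).
      intros; reflexivity. ring.
    + intros s Hs. assert (0 < s) by (apply Rabs_def2 in Hs; lra). rewrite Hw, wform; auto.
  - eapply uniqueness_limite. apply H2.
    apply (dl_local (fun s => e1f x y s * (snd (phi t) - snd (psi t)) + e2f x y s * (fst (phi t) - fst (psi t))) (fun s => snd (w s t)) r _ r); auto.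
    + eapply dl_ext. apply (dl_plus _ _ r _ _ (dl_mult _ _ r _ _ (dl_e1 x y r Hr) (dl_const (snd (phi t) - snd (psi t)) r)) (dl_mult _ _ r _ _ (dl_e2 x y r Hr) (dl_const (fst (phi t) - fst (psi t)) r))).
      intros; reflexivity. ring.
    + intros s Hs. assert (0 < s) by (apply Rabs_def2 in Hs; lra). rewrite Hw, wform; auto.
Qed.

Lemma per_nat {A} (f : R -> A) : periodic2pi f -> forall n t, f (t + 2*PI*INR n) = f t.
Proof. intros H n; induction n; intros t.
  - simpl. f_equal; ring.
  - rewrite S_INR. replace (t + 2*PI*(INR n + 1)) with ((t + 2*PI*INR n) + 2*PI) by ring.
    rewrite H; auto. Qed.

Lemma per_Z {A} (f : R -> A) : periodic2pi f -> forall z t, f (t + 2*PI*IZR z) = f t.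
Proof. intros H z t. destruct (Z_le_gt_dec 0 z).
  - rewrite <- (Z2Nat.id z) by lia. rewrite <- INR_IZR_INZ. apply per_nat; auto.
  - replace z with (- Z.of_nat (Z.to_nat (-z)))%Z by lia. rewrite opp_IZR, <- INR_IZR_INZ.
    rewrite <- (per_nat f H (Z.to_nat (-z)) (t + 2*PI*(- INR (Z.to_nat (- z))))).
    f_equal; ring. Qed.

Lemma per_reduce {A} (f : R -> A) : periodic2pi f -> forall t0 t, exists t', t0 <= t' <= t0 + 2*PI /\ f t' = f t.
Proof. intros H t0 t. pose proof PI_RGT_0 as HP.
  set (z := (up ((t - t0)/(2*PI)) - 1)%Z).
  destruct (archimed ((t - t0)/(2*PI))) as [A1 A2].
  assert (Hz : IZR z = IZR (up ((t - t0)/(2*PI))) - 1) by (unfold z; rewrite minus_IZR; auto).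
  exists (t + 2*PI*IZR (-z)). split.
  - rewrite opp_IZR, Hz.
    assert (t0 <= t - 2*PI*(IZR (up ((t - t0) / (2 * PI))) - 1) <= t0 + 2*PI); [|lra].
    set (u := IZR (up ((t - t0) / (2 * PI)))) in *.
    assert (Heq : t - t0 = 2*PI * ((t - t0)/(2*PI))) by (field; lra).
    split; nra.
  - apply per_Z; auto.
Qed.

Lemma mono_dec (f : R -> R) a b : a <= b ->
  (forall s, a <= s <= b -> exists l, derivable_pt_lim f s l /\ l <= 0) -> f b <= f a.
Proof. intros Hab H. destruct (Req_dec a b) as [->|Hne]; [lra|].
  set (f' := fun s => epsilon (inhabits 0) (fun l => derivable_pt_lim f s l /\ l <= 0)).
  assert (Hf : forall s, a <= s <= b -> derivable_pt_lim f s (f' s) /\ f' s <= 0).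
  { intros s Hs. unfold f'. apply epsilon_spec. apply H; auto. }
  destruct (MVT_cor2 f f' a b) as [c0 [E Hc]]; [lra| intros; apply Hf; auto |].
  assert (f' c0 <= 0) by (apply Hf; lra). nra. Qed.

Lemma dl_zero (f : R -> R) x l d : derivable_pt_lim f x l -> 0 < d ->
  (forall s, Rabs (s - x) < d -> f s = 0) -> l = 0.
Proof. intros H Hd E. eapply uniqueness_limite. apply H.
  apply (dl_local (fun _ => 0) f x 0 d); auto. apply dl_const.
  intros; symmetry; auto. Qed.

Lemma e_at_1 x y : e1f x y 1 = 1 /\ e2f x y 1 = 0.
Proof. unfold e1f, e2f. rewrite ln_1, !Rmult_0_r, exp_0, cos_0, sin_0. split; ring. Qed.

Lemma e_at_r1 x y : y <> 0 -> e1f x y (exp (PI/(2*y))) = 0 /\ e2f x y (exp (PI/(2*y))) = exp (x*PI/(2*y)).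
Proof. intros Hy. unfold e1f, e2f. rewrite ln_exp.
  replace (y * (PI/(2*y))) with (PI/2) by (field; auto).
  replace (x * (PI/(2*y))) with (x*PI/(2*y)) by (field; auto).
  rewrite cos_PI2, sin_PI2. split; ring. Qed.

Section Cx.
Variables (a B nu x y : R) (c : R -> Cpx) (w : R -> R -> Cpx) (phi psi : R -> Cpx).
Hypothesis Ha : 0 < a.
Hypothesis Hy : y <> 0.
Hypothesis Hsol : is_solution a (B) nu 1 c w.
Hypothesis Hw : forall r t, 0 < r -> w r t = Cadd (Cmul (Cpow_pos r (x,y)) (phi t)) (Cconj (Cmul (Cpow_pos r (x,y)) (psi t))).

Let r1 := exp (PI/(2*y)).
Let m := exp (x*PI/(2*y)).
Let N := a*a + B*B.
Let k1 := 2*x*B/N.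
Let Df s := fst (phi s) * fst (phi s) + snd (phi s) * snd (phi s) - fst (psi s) * fst (psi s) - snd (psi s) * snd (psi s).
Let Sf s := fst (phi s) * fst (phi s) + snd (phi s) * snd (phi s) + fst (psi s) * fst (psi s) + snd (psi s) * snd (psi s).
Let G s := y * exp (- k1 * s) * Df s.

Lemma cx_deriv s : derivable_pt_lim G s (- (2*y*y*a/N) * exp (-k1 * s) * Sf s).
Proof.
  assert (Hr1 : 0 < r1) by apply exp_pos. assert (Hm : 0 < m) by apply exp_pos.
  assert (HN : 0 < N) by (unfold N; nra).
  destruct (e_at_1 x y) as [E11 E21]. destruct (e_at_r1 x y Hy) as [E1r E2r]. fold r1 m in E1r, E2r.
  destruct (pde_comp _ _ _ _ _ _ 1 s Hsol Rlt_0_1) as [t1 [t2 [d1 [d2 [Ht1 [Ht2 [Hd1 [Hd2 [Q1 Q2]]]]]]]]].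
  destruct (pde_comp _ _ _ _ _ _ r1 s Hsol Hr1) as [t1' [t2' [d1' [d2' [Ht1' [Ht2' [Hd1' [Hd2' [Q3 Q4]]]]]]]]].
  destruct (wr_formula _ _ _ _ _ _ _ _ _ Hw Rlt_0_1 Hd1 Hd2) as [D1 D2].
  destruct (wr_formula _ _ _ _ _ _ _ _ _ Hw Hr1 Hd1' Hd2') as [D1' D2'].
  rewrite E11, E21 in D1, D2. rewrite E1r, E2r in D1', D2'.
  assert (W1 : forall s, w 1 s = (fst (phi s) + fst (psi s), snd (phi s) - snd (psi s))).
  { intros u. rewrite Hw, wform, E11, E21 by lra. f_equal; ring. }
  assert (Wr : forall s, w r1 s = (- m * (snd (phi s) + snd (psi s)), m * (fst (phi s) - fst (psi s)))).
  { intros u. rewrite Hw, wform, E1r, E2r by lra. f_equal; ring. }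
  rewrite W1 in Q1, Q2; rewrite Wr in Q3, Q4. simpl in Q1, Q2, Q3, Q4.
  assert (HP1 : derivable_pt_lim (fun s => fst (phi s)) s ((t1 + t2'/m)/2)).
  { eapply dl_ext. apply (dl_scal (/2) _ s _ (dl_plus _ _ s _ _ Ht1 (dl_scal (/m) _ s _ Ht2'))).
    intros u; cbv beta. rewrite W1, Wr; simpl. field; lra. unfold Rdiv; ring. }
  assert (HU1 : derivable_pt_lim (fun s => fst (psi s)) s ((t1 - t2'/m)/2)).
  { eapply dl_ext. apply (dl_scal (/2) _ s _ (dl_minus _ _ s _ _ Ht1 (dl_scal (/m) _ s _ Ht2'))).
    intros u; cbv beta. rewrite W1, Wr; simpl. field; lra. unfold Rdiv; ring. }
  assert (HP2 : derivable_pt_lim (fun s => snd (phi s)) s ((t2 - t1'/m)/2)).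
  { eapply dl_ext. apply (dl_scal (/2) _ s _ (dl_minus _ _ s _ _ Ht2 (dl_scal (/m) _ s _ Ht1'))).
    intros u; cbv beta. rewrite W1, Wr; simpl. field; lra. unfold Rdiv; ring. }
  assert (HU2 : derivable_pt_lim (fun s => snd (psi s)) s (- (t2 + t1'/m)/2)).
  { eapply dl_ext. apply (dl_scal (-/2) _ s _ (dl_plus _ _ s _ _ Ht2 (dl_scal (/m) _ s _ Ht1'))).
    intros u; cbv beta. rewrite W1, Wr; simpl. field; lra. unfold Rdiv; ring. }
  unfold G, Df, Sf. eapply dl_ext.
  { apply dl_mult. apply dl_scal. apply dl_comp. apply dl_scal. apply dl_id. apply derivable_pt_lim_exp.
    apply dl_minus. apply dl_minus. apply dl_plus. apply (dl_mult _ _ _ _ _ HP1 HP1). apply (dl_mult _ _ _ _ _ HP2 HP2).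
    apply (dl_mult _ _ _ _ _ HU1 HU1). apply (dl_mult _ _ _ _ _ HU2 HU2). }
  { intros; reflexivity. }
  cbv beta.
  set (P1 := fst (phi s)) in *. set (P2 := snd (phi s)) in *. set (U1 := fst (psi s)) in *. set (U2 := snd (psi s)) in *.
  set (c1 := fst (c s)) in *. set (c2 := snd (c s)) in *.
  assert (T1 : t1 = (a * (a*t1 - B*1*t2) + B * (a*t2 + B*1*t1))/N) by (unfold N; field; nra).
  assert (T2 : t2 = (a * (a*t2 + B*1*t1) - B * (a*t1 - B*1*t2))/N) by (unfold N; field; nra).
  assert (T1' : t1' = (a * (a*t1' - B*1*t2') + B * (a*t2' + B*1*t1'))/N) by (unfold N; field; nra).
  assert (T2' : t2' = (a * (a*t2' + B*1*t1') - B * (a*t1' - B*1*t2'))/N) by (unfold N; field; nra).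
  assert (R1 : a*t1 - B*1*t2 = - (1*d2) + B*1*nu*(P1+U1) + a*nu*(P2-U2) + c1*(P1+U1) + c2*(P2-U2)) by lra.
  assert (R2 : a*t2 + B*1*t1 = 1*d1 + B*1*nu*(P2-U2) - a*nu*(P1+U1) - c1*(P2-U2) + c2*(P1+U1)) by lra.
  assert (R3 : a*t1' - B*1*t2' = - (r1*d2') + B*1*nu*(-m*(P2+U2)) + a*nu*(m*(P1-U1)) + c1*(-m*(P2+U2)) + c2*(m*(P1-U1))) by lra.
  assert (R4 : a*t2' + B*1*t1' = r1*d1' + B*1*nu*(m*(P1-U1)) - a*nu*(-m*(P2+U2)) - c1*(m*(P1-U1)) + c2*(-m*(P2+U2))) by lra.
  rewrite R1, R2 in T1, T2. rewrite R3, R4 in T1', T2'.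
  rewrite D1, D2 in T1, T2. rewrite D1', D2' in T1', T2'.
  rewrite T1, T2, T1', T2'. unfold k1, N. field. repeat split; [nra|lra|lra].
Qed.

Hypothesis Hphi : periodic2pi phi.
Hypothesis Hpsi : periodic2pi psi.

Lemma cx_main r0 t0 : 0 < r0 -> w r0 t0 = C0 -> forall r t, 0 < r -> w r t = C0.
Proof.
  intros Hr0 Hz. pose proof PI_RGT_0 as HPI.
  assert (HN : 0 < N) by (unfold N; nra).
  assert (HD0 : Df t0 = 0).
  { rewrite Hw, wform in Hz by auto. unfold C0 in Hz. injection Hz as Z1 Z2.
    unfold Df. set (e1 := e1f x y r0) in *. set (e2 := e2f x y r0) in *.
    assert (He : e1*e1 + e2*e2 = exp (x * ln r0) * exp (x * ln r0)).
    { unfold e1, e2, e1f, e2f. pose proof (sin2_cos2 (y * ln r0)). unfold Rsqr in H. nra. }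
    assert (Hp : 0 < e1*e1 + e2*e2) by (rewrite He; pose proof (exp_pos (x * ln r0)); nra).
    set (P1 := fst (phi t0)) in *. set (P2 := snd (phi t0)) in *. set (U1 := fst (psi t0)) in *. set (U2 := snd (psi t0)) in *.
    assert (A1 : e1*P1 - e2*P2 = -(e1*U1 - e2*U2)) by lra.
    assert (A2 : e1*P2 + e2*P1 = e1*U2 + e2*U1) by lra.
    assert (Hid : (e1*e1+e2*e2) * (P1*P1+P2*P2-U1*U1-U2*U2) =
       (e1*P1 - e2*P2)^2 + (e1*P2 + e2*P1)^2 - (e1*U1 - e2*U2)^2 - (e1*U2 + e2*U1)^2) by ring.
    rewrite A1, A2 in Hid. assert (Hz0 : (e1*e1+e2*e2) * (P1*P1+P2*P2-U1*U1-U2*U2) = 0) by (rewrite Hid; ring).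
    apply Rmult_integral in Hz0. destruct Hz0; lra. }
  assert (Dper : forall t, Df (t + 2*PI) = Df t) by (intros; unfold Df; rewrite Hphi, Hpsi; auto).
  assert (Gz : forall s, t0 - 2*PI <= s <= t0 + 2*PI -> G s = 0).
  { intros s Hs.
    assert (Hmono : forall u v, u <= v -> G v <= G u).
    { intros u v Huv. apply mono_dec; auto. intros s' _. eexists; split. apply cx_deriv.
      assert (0 <= Sf s') by (unfold Sf; nra). pose proof (exp_pos (- k1 * s')).
      assert (0 <= 2*y*y*a/N) by (apply Rmult_le_pos; [nra| left; apply Rinv_0_lt_compat; auto]).
      assert (0 <= (2*y*y*a/N) * exp (- k1 * s') * Sf s') by (apply Rmult_le_pos; [apply Rmult_le_pos|]; lra).
      lra. }
    assert (G1 : G (t0 - 2*PI) = 0).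
    { unfold G. replace (Df (t0 - 2*PI)) with (Df t0). rewrite HD0; ring.
      rewrite <- (Dper (t0 - 2*PI)). f_equal; ring. }
    assert (G2 : G (t0 + 2*PI) = 0) by (unfold G; rewrite Dper, HD0; ring).
    pose proof (Hmono _ _ (proj1 Hs)). pose proof (Hmono _ _ (proj2 Hs)). lra. }
  assert (Z : forall s, t0 - PI <= s <= t0 + PI -> phi s = (0,0) /\ psi s = (0,0)).
  { intros s Hs. assert (L := dl_zero G s _ PI (cx_deriv s) HPI).
    assert (Hl : - (2*y*y*a/N) * exp (- k1 * s) * Sf s = 0).
    { apply L. intros u Hu. apply Gz. apply Rabs_def2 in Hu. lra. }
    assert (Hk : 0 < 2*y*y*a/N).
    { apply Rmult_lt_0_compat; [|apply Rinv_0_lt_compat; auto].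
      assert (0 < y*y) by (destruct (Rlt_or_le 0 y); [nra|]; destruct H; [nra|contradiction]). nra. }
    pose proof (exp_pos (- k1 * s)).
    assert (HS : Sf s = 0).
    { apply Rmult_integral in Hl. destruct Hl as [Hl|Hl]; auto. apply Rmult_integral in Hl. destruct Hl; lra. }
    unfold Sf in HS. destruct (phi s) as [p1 p2], (psi s) as [u1 u2]. simpl in HS.
    assert (p1 = 0) by nra. assert (p2 = 0) by nra. assert (u1 = 0) by nra. assert (u2 = 0) by nra. subst. auto. }
  intros r t Hr.
  assert (Hpp : periodic2pi (fun t => (phi t, psi t))) by (intros u; rewrite Hphi, Hpsi; auto).
  destruct (per_reduce _ Hpp (t0 - PI) t) as [t' [Ht' E]].
  injection E as E1 E2. destruct (Z t' ltac:(lra)) as [Z1 Z2].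
  rewrite Hw, wform by auto. rewrite <- E1, <- E2, Z1, Z2. unfold C0; simpl. f_equal; ring.
Qed.
End Cx.

Lemma sq_bound p q u v A : Rabs p <= A -> Rabs q <= A -> (p*u + q*v)^2 <= 2*(A*A)*(u*u+v*v).
Proof. intros Hp Hq.
  assert (p*p <= A*A) by (unfold Rabs in Hp; destruct (Rcase_abs p); nra).
  assert (q*q <= A*A) by (unfold Rabs in Hq; destruct (Rcase_abs q); nra).
  assert (0 <= (p*u-q*v)^2) by (apply pow2_ge_0). assert ((p*u+q*v)^2 <= 2*(p*p)*(u*u) + 2*(q*q)*(v*v)) by nra.
  assert (0 <= u*u) by nra. assert (0 <= v*v) by nra. nra. Qed.

Lemma abs3 u v z nu : 0 <= nu < 1 -> Rabs (u + v*nu + z) <= Rabs u + Rabs v + Rabs z.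
Proof. intros Hn. eapply Rle_trans. apply Rabs_triang. eapply Rle_trans.
  apply Rplus_le_compat_r. apply Rabs_triang. rewrite Rabs_mult, (Rabs_pos_eq nu) by lra.
  pose proof (Rabs_pos v). nra. Qed.

Section Rl.
Variables (a B nu x : R) (c : R -> Cpx) (w : R -> R -> Cpx) (phi psi : R -> Cpx).
Hypothesis Ha : 0 < a.
Hypothesis Hnu : 0 <= nu < 1.
Hypothesis Hsol : is_solution a (B) nu 1 c w.
Hypothesis Hw : forall r t, 0 < r -> w r t = Cadd (Cmul (Cpow_pos r (x,0)) (phi t)) (Cconj (Cmul (Cpow_pos r (x,0)) (psi t))).
Hypothesis Hc1 : continuity (fun s => fst (c s)).
Hypothesis Hc2 : continuity (fun s => snd (c s)).
Hypothesis Hper : periodic2pi (w 1).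

Lemma rl_main r0 t0 : 0 < r0 -> w r0 t0 = C0 -> forall r t, 0 < r -> w r t = C0.
Proof.
  intros Hr0 Hz. pose proof PI_RGT_0 as HPI.
  destruct (e_at_1 x 0) as [E11 E21].
  assert (E2 : forall r, e2f x 0 r = 0) by (intros; unfold e2f; rewrite Rmult_0_l, sin_0; ring).
  assert (E1p : forall r, 0 < e1f x 0 r) by (intros; unfold e1f; rewrite Rmult_0_l, cos_0, Rmult_1_r; apply exp_pos).
  set (h1 := fun s => fst (w 1 s)). set (h2 := fun s => snd (w 1 s)).
  assert (W : forall r t, 0 < r -> w r t = (e1f x 0 r * h1 t, e1f x 0 r * h2 t)).
  { intros r t Hr. unfold h1, h2. rewrite (Hw r), (Hw 1), !wform, !E2, E11 by lra. simpl. f_equal; ring. }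
  assert (Hh : forall s, h1 s = fst (phi s) + fst (psi s) /\ h2 s = snd (phi s) - snd (psi s)).
  { intros s. unfold h1, h2. rewrite Hw, wform, E11, E21 by lra. simpl. split; ring. }
  assert (H0 : h1 t0 = 0 /\ h2 t0 = 0).
  { rewrite W in Hz by auto. unfold C0 in Hz. injection Hz as Z1 Z2. pose proof (E1p r0).
    apply Rmult_integral in Z1. apply Rmult_integral in Z2. split; [destruct Z1|destruct Z2]; auto; lra. }
  set (N := a*a + B*B). assert (HN : 0 < N) by (unfold N; nra).
  set (fc := fun s => Rabs (fst (c s)) + Rabs (snd (c s))).
  destruct (continuity_ab_maj fc t0 (t0 + 2*PI)) as [Mx [HM _]]; [lra| |].
  { intros s _. unfold fc. exact (continuity_pt_plus _ _ s
      (continuity_pt_comp _ Rabs s (Hc1 s) (Rcontinuity_abs _))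
      (continuity_pt_comp _ Rabs s (Hc2 s) (Rcontinuity_abs _))). }
  set (M := fc Mx) in *.
  set (A := Rabs x + Rabs a + Rabs B + M).
  set (K := (4*(A*A) + N)/N).
  set (g := fun s => h1 s * h1 s + h2 s * h2 s).
  set (G := fun s => exp (- K * s) * g s).
  assert (Gd : forall s, t0 <= s <= t0 + 2*PI -> exists l, derivable_pt_lim G s l /\ l <= 0).
  { intros s Hs.
    destruct (pde_comp _ _ _ _ _ _ 1 s Hsol Rlt_0_1) as [t1 [t2 [d1 [d2 [Ht1 [Ht2 [Hd1 [Hd2 [Q1 Q2]]]]]]]]].
    destruct (wr_formula _ _ _ _ _ _ _ _ _ Hw Rlt_0_1 Hd1 Hd2) as [D1 D2].
    rewrite E11, E21 in D1, D2. destruct (Hh s) as [Hh1 Hh2].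
    fold (h1 s) (h2 s) in Q1, Q2. fold h1 in Ht1. fold h2 in Ht2.
    eexists; split.
    { unfold G. apply dl_mult. apply dl_comp. apply dl_scal. apply dl_id. apply derivable_pt_lim_exp.
      unfold g. apply dl_plus. apply (dl_mult _ _ _ _ _ Ht1 Ht1). apply (dl_mult _ _ _ _ _ Ht2 Ht2). }
    cbv beta.
    assert (HMs : Rabs (fst (c s)) <= M /\ Rabs (snd (c s)) <= M).
    { pose proof (HM s Hs). unfold fc in H. pose proof (Rabs_pos (fst (c s))). pose proof (Rabs_pos (snd (c s))). fold M in H. lra. }
    set (c1 := fst (c s)) in *. set (c2 := snd (c s)) in *.
    set (u1 := h1 s) in *. set (u2 := h2 s) in *.
    assert (Dd1 : d1 = x * u1) by (rewrite D1, Hh1; field).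
    assert (Dd2 : d2 = x * u2) by (rewrite D2, Hh2; field).
    assert (R1 : a*t1 - B*1*t2 = (0 + B*nu + c1) * u1 + ((-x) + a*nu + c2) * u2).
    { rewrite Dd2 in Q1. lra. }
    assert (R2 : a*t2 + B*1*t1 = (x + (-a)*nu + c2) * u1 + (0 + B*nu + (-c1)) * u2).
    { rewrite Dd1 in Q2. lra. }
    assert (Hab : forall p q z, Rabs p + Rabs q + Rabs z <= A -> Rabs (p + q*nu + z) <= A).
    { intros p q z Hpqz. eapply Rle_trans. apply abs3; auto. auto. }
    pose proof (Rabs_pos x). pose proof (Rabs_pos a). pose proof (Rabs_pos B).
    assert (B1 : (a*t1 - B*1*t2)^2 <= 2*(A*A)*(u1*u1+u2*u2)).
    { rewrite R1. apply sq_bound; apply Hab; rewrite ?Rabs_R0, ?Rabs_Ropp; unfold A; lra. }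
    assert (B2 : (a*t2 + B*1*t1)^2 <= 2*(A*A)*(u1*u1+u2*u2)).
    { rewrite R2. apply sq_bound; apply Hab; rewrite ?Rabs_R0, ?Rabs_Ropp; unfold A; lra. }
    assert (Id : N * (u1*t1 + u2*t2) = (a*t1 - B*1*t2) * (a*u1 - B*u2) + (a*t2 + B*1*t1) * (B*u1 + a*u2)) by (unfold N; ring).
    assert (Iv : (a*u1 - B*u2)^2 + (B*u1 + a*u2)^2 = N * (u1*u1+u2*u2)) by (unfold N; ring).
    assert (S1 : 2 * ((a*t1 - B*1*t2) * (a*u1 - B*u2)) <= (a*t1 - B*1*t2)^2 + (a*u1 - B*u2)^2)
      by (pose proof (pow2_ge_0 ((a*t1 - B*1*t2) - (a*u1 - B*u2))); nra).
    assert (S2 : 2 * ((a*t2 + B*1*t1) * (B*u1 + a*u2)) <= (a*t2 + B*1*t1)^2 + (B*u1 + a*u2)^2)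
      by (pose proof (pow2_ge_0 ((a*t2 + B*1*t1) - (B*u1 + a*u2))); nra).
    assert (Main : N * (2*(u1*t1 + u2*t2)) <= N * (K * (u1*u1+u2*u2))).
    { replace (N * (K * (u1*u1+u2*u2))) with ((4*(A*A) + N) * (u1*u1+u2*u2)) by (unfold K; field; lra).
      lra. }
    assert (Main2 : 2*(u1*t1 + u2*t2) <= K * (u1*u1+u2*u2)) by (apply Rmult_le_reg_l with N; auto).
    pose proof (exp_pos (- K * s)).
    assert (0 <= exp (- K * s) * (K * (u1*u1+u2*u2) - 2*(u1*t1 + u2*t2))) by (apply Rmult_le_pos; lra).
    unfold g; fold u1 u2; cbv beta; fold u1 u2. replace (exp (- K * s) * (- K * 1) * (u1 * u1 + u2 * u2) + exp (- K * s) * (t1 * u1 + u1 * t1 + (t2 * u2 + u2 * t2))) with (- (exp (- K * s) * (K * (u1*u1+u2*u2) - 2*(u1*t1 + u2*t2)))) by ring. lra. }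
  assert (Gn : forall s, 0 <= G s) by (intros; unfold G, g; pose proof (exp_pos (-K*s)); apply Rmult_le_pos; nra).
  assert (G0 : G t0 = 0) by (unfold G, g; destruct H0 as [-> ->]; ring).
  assert (Hz1 : forall s, t0 <= s <= t0 + 2*PI -> w 1 s = (0,0)).
  { intros s Hs. assert (G s <= G t0) by (apply mono_dec; [lra| intros; apply Gd; lra]).
    assert (Gs : G s = 0) by (pose proof (Gn s); lra).
    unfold G in Gs. apply Rmult_integral in Gs. destruct Gs as [Gs|Gs]; [pose proof (exp_pos (-K*s)); lra|].
    unfold g, h1, h2 in Gs. destruct (w 1 s) as [v1 v2]. simpl in Gs.
    assert (v1 = 0) by nra. assert (v2 = 0) by nra. subst; auto. }
  intros r t Hr. rewrite W by auto.
  destruct (per_reduce _ Hper t0 t) as [t' [Ht' E]].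
  unfold h1, h2. rewrite <- E, Hz1 by auto. unfold C0; simpl. f_equal; ring.
Qed.
End Rl.

Lemma sol_conv a b nu eps c w : is_solution a b nu eps c w -> is_solution a (b*eps) nu 1 c w.
Proof. unfold is_solution. replace (lam a (b*eps) 1) with (lam a b eps) by (unfold lam; f_equal; ring). auto. Qed.

Theorem proposition2p1 (a b nu : R) (k : nat) (c : R -> Cpx) (eps : R)
  (w : R -> R -> Cpx) :
  0 < a -> b <> 0 -> 0 <= nu < 1 -> (2 <= k)%nat -> Ck_S1 k c ->
  basic_solution a b nu eps c w ->
  forall r t, 0 < r -> w r t <> C0.
Proof.
  intros Ha Hb Hnu Hk Hc [Hsol [Hper [[r1' [t1' [Hr1' Hne]]] [[x y] [phi [psi [Hphi [Hpsi Hw]]]]]]]] r0 t0 Hr0 Hz.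
  apply sol_conv in Hsol.
  destruct (Req_dec y 0) as [Hy|Hy].
  - subst y. destruct Hc as [_ [D [HD0 [_ HDc]]]]. destruct (HDc 0%nat (Nat.le_0_l k)) as [C1 C2].
    rewrite HD0 in C1, C2. unfold Re, Im in C1, C2.
    apply Hne. eapply (rl_main a (b*eps) nu x c w phi psi); eauto; try (apply Hper; lra).
  - apply Hne. eapply (cx_main a (b*eps) nu x y c w phi psi); eauto.
Qed.
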